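(* Let $f:X\to X$ be a piecewise contracting map on a compact, locally connected metric space $(X,d)$ with continuity pieces $X_1,\dots,X_N$, discontinuity set $\Delta$ and attractor $\Lambda$. If $\Delta=\emptyset$ or $d(\Lambda,\Delta)\neq0$, then there exists $n_0\ge1$ such that for every atom $A$ of generation $n\ge n_0$ there is $i\in\{1,\dots,N\}$ with $A\subset X_i$.
   Context: A map $f:X\to X$ on a compact, locally connected metric space $(X,d)$ is piecewise contracting if there are $N\ge2$ non-empty, pairwise disjoint open sets $X_1,\dots,X_N$ with $X=\bigcup_i\overline{X_i}$, a constant $\lambda\in(0,1)$ with $d(f(x),f(y))\le\lambda d(x,y)$ for all $x,y$ in the same $X_i$, and such that $\tilde X:=\bigcap_{n\ge0}f^{-n}(X\setminus\Delta)\neq\emptyset$, where $\Delta:=X\setminus\bigcup_iX_i$ ($f$ is arbitrary on $\Delta$). For $A\subset X$ let $F_i(A):=\overline{f(A\cap X_i)}$; an atom of generation $n\ge1$ is a set $F_{i_n}\circ\cdots\circ F_{i_1}(X)$ with $i_1,\dots,i_n\in\{1,\dots,N\}$; $\Lambda_n$ is the union of all atoms of generation $n$ and the attractor is $\Lambda:=\bigcap_{n\ge1}\Lambda_n$. Here $d(\Lambda,\Delta)=\inf\{d(x,y):x\in\Lambda,y\in\Delta\}$. *)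

(* Defs.v *)
From HB Require Import structures.
From mathcomp Require Import all_boot all_order all_algebra.
From mathcomp Require Import all_classical all_reals all_analysis.
Set Implicit Arguments.
Unset Strict Implicit.
Unset Printing Implicit Defensive.
Import Order.TTheory GRing.Theory Num.Theory.
Local Open Scope classical_set_scope.
Local Open Scope ring_scope.

Section PC.
Context {R : realType} {X : metricType R}.

Definition locally_connected_space : Prop :=
  forall (x : X) (U : set X), nbhs x U ->
    exists V : set X, [/\ open V, V x, connected V & V `<=` U].

Definition disc_set (N : nat) (Xs : 'I_N -> set X) : set X :=
  ~` (\bigcup_(i in [set: 'I_N]) Xs i).

Definition Xtilde (f : X -> X) (N : nat) (Xs : 'I_N -> set X) : set X :=
  [set x | forall n : nat, ~ disc_set Xs (iter n f x)].

Definition Fmap (f : X -> X) (N : nat) (Xs : 'I_N -> set X) (i : 'I_N)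
    (A : set X) : set X :=
  closure (f @` (A `&` Xs i)).

(* For w = [:: i_1; ...; i_n], atom_of w = F_{i_n} o ... o F_{i_1} (X). *)
Definition atom_of (f : X -> X) (N : nat) (Xs : 'I_N -> set X)
    (w : seq 'I_N) : set X :=
  foldl (fun A i => Fmap f Xs i A) [set: X] w.

Definition is_atom (f : X -> X) (N : nat) (Xs : 'I_N -> set X) (n : nat)
    (A : set X) : Prop :=
  (1 <= n)%N /\ exists w : seq 'I_N, size w = n /\ A = atom_of f Xs w.

Definition Lambda_n (f : X -> X) (N : nat) (Xs : 'I_N -> set X) (n : nat)
    : set X :=
  [set x | exists A, is_atom f Xs n A /\ A x].

Definition attractor (f : X -> X) (N : nat) (Xs : 'I_N -> set X) : set X :=
  [set x | forall n : nat, (1 <= n)%N -> Lambda_n f Xs n x].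

(* d(A, B) = inf {d(x,y) : x in A, y in B}, in the extended reals (inf of the empty set is +oo). *)
Definition set_dist (A B : set X) : \bar R :=
  ereal_inf [set EFin (mdist x y) | x in A & y in B].

Definition piecewise_contracting (f : X -> X) (N : nat) (Xs : 'I_N -> set X)
    : Prop :=
  [/\ (2 <= N)%N,
      (forall i, Xs i !=set0),
      (forall i, open (Xs i)),
      (forall i j, i != j -> Xs i `&` Xs j = set0)
    & [set: X] = \bigcup_(i in [set: 'I_N]) closure (Xs i)] /\
  (exists lambda : R, 0 < lambda < 1 /\
     forall i x y, Xs i x -> Xs i y ->
       mdist (f x) (f y) <= lambda * mdist x y) /\
  Xtilde f Xs !=set0.

End PC.

(* Main.v *)
Require Import Defs.
From HB Require Import structures.
From mathcomp Require Import all_boot all_order all_algebra.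
From mathcomp Require Import all_classical all_reals all_analysis.
From mathcomp Require Import ring lra.
Import Order.TTheory GRing.Theory Num.Theory.
Import numFieldNormedType.Exports.
Local Open Scope classical_set_scope.
Local Open Scope ring_scope.

Section Helpers.
Context {R : realType} {X : metricType R}.
Implicit Types (f : X -> X).

Lemma msym (x y : X) : mdist x y = mdist y x.
Proof. exact: metric_sym. Qed.

Lemma mtri (x y z : X) : mdist x z <= mdist x y + mdist y z.
Proof. exact: metric_triangle. Qed.

Lemma inball (x y : X) e : ball x e y <-> mdist x y < e.
Proof. by rewrite ballEmdist. Qed.

Lemma atom_rcons f N (Xs : 'I_N -> set X) w i :
  atom_of f Xs (rcons w i) = Fmap f Xs i (atom_of f Xs w).
Proof. by rewrite /atom_of foldl_rcons. Qed.

Lemma atom_closed f N (Xs : 'I_N -> set X) w : closed (atom_of f Xs w).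
Proof.
case/lastP: w => [|w i]; first exact: closedT.
rewrite atom_rcons; exact: closed_closure.
Qed.

Lemma Fmap_mono f N (Xs : 'I_N -> set X) i A B :
  A `<=` B -> Fmap f Xs i A `<=` Fmap f Xs i B.
Proof.
move=> AB; apply: closureS => y [x [Ax Xx] <-]; exists x => //; split => //.
exact: AB.
Qed.

Lemma foldl_mono f N (Xs : 'I_N -> set X) w A B :
  A `<=` B -> foldl (fun A i => Fmap f Xs i A) A w `<=`
              foldl (fun A i => Fmap f Xs i A) B w.
Proof.
elim: w A B => [//|i w IH] A B AB /=; apply: IH; exact: Fmap_mono.
Qed.

Lemma atom_drop f N (Xs : 'I_N -> set X) k w :
  atom_of f Xs w `<=` atom_of f Xs (drop k w).
Proof.
elim: k w => [|k IH] w; first by rewrite drop0.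
case: w => [//|i w] /=.
apply: subset_trans (IH w); rewrite /atom_of /=; exact: foldl_mono.
Qed.


Lemma Lambda_mono f N (Xs : 'I_N -> set X) m n x :
  (1 <= m)%N -> (m <= n)%N -> Lambda_n f Xs n x -> Lambda_n f Xs m x.
Proof.
move=> m1 mn [A [[n1 [w [sw ->]]] Ax]].
exists (atom_of f Xs (drop (n - m) w)); split; last exact: atom_drop.
split => //; exists (drop (n - m) w); split => //.
by rewrite size_drop sw subKn.
Qed.

Lemma Lambda_closed f N (Xs : 'I_N -> set X) n : closed (Lambda_n f Xs n).
Proof.
rewrite -openC openE => x nLx; rewrite /interior.
case: n nLx => [|n] nLx.
  by apply: nearW => y [A [[]]].
have H : forall t : n.+1.-tuple 'I_N, \forall y \near x, ~ atom_of f Xs t y.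
  move=> t; apply: open_nbhs_nbhs; split.
    by apply: closed_openC; exact: atom_closed.
  move=> At; apply: nLx; exists (atom_of f Xs t); split => //.
  by split => //; exists t; rewrite size_tuple.
have := @filter_forall _ _ _ _ (nbhs_filter x) H; apply: filterS => y Hy [A [[_ [w [sw ->]]] Ay]].
have sw' : size w == n.+1 by rewrite sw.
by apply: (Hy (Tuple sw')).
Qed.

Lemma closure_small (S : set X) c :
  (forall y z, S y -> S z -> mdist y z <= c) ->
  forall p q, closure S p -> closure S q -> mdist p q <= c.
Proof.
move=> Sc p q cp cq; apply/ler_addgt0Pr => e e0.
have e2 : 0 < e/2 by rewrite divr_gt0.
have [s [Ss /inball ps]] := cp _ (nbhsx_ballx p _ e2).
have [t [St /inball qt]] := cq _ (nbhsx_ballx q _ e2).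
have := Sc _ _ Ss St.
have := mtri p s q; have := mtri s t q; rewrite (msym t q).
lra.
Qed.

Lemma atom_diam f N (Xs : 'I_N -> set X) lam D :
  0 <= lam ->
  (forall i x y, Xs i x -> Xs i y -> mdist (f x) (f y) <= lam * mdist x y) ->
  (forall y z : X, mdist y z <= D) ->
  forall w y z, atom_of f Xs w y -> atom_of f Xs w z ->
    mdist y z <= lam ^+ size w * D.
Proof.
move=> l0 Hf HD; elim/last_ind => [|w i IH] y z.
  by rewrite /= expr0 mul1r.
rewrite !atom_rcons size_rcons; apply: closure_small.
move=> _ _ [y' [Ay Xy] <-] [z' [Az Xz] <-].
apply: le_trans (Hf _ _ _ Xy Xz) _.
rewrite exprS -mulrA; apply: ler_wpM2l => //; exact: IH.
Qed.

Lemma stepA f N (Xs : 'I_N -> set X) r :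
  compact [set: X] -> 0 < r ->
  exists n1, forall n, (n1 <= n)%N -> forall x, Lambda_n f Xs n x ->
    exists l, attractor f Xs l /\ mdist l x < r.
Proof.
move=> cX r0.
have nc := (compact_near_coveringP _).1 cX.
pose P n x := Lambda_n f Xs n x -> exists l, attractor f Xs l /\ mdist l x < r.
have H : forall x, [set: X] x -> \forall x' \near x & i \near \oo, P i x'.
  move=> x _; case: (pselect (attractor f Xs x)) => [Ax|nAx].
    exists (ball x r, setT) => /=; first by split; [exact: nbhsx_ballx|exact: filterT].
    case => x' n /= [bx _] Ln; exists x; split => //; exact/inball.
  have [m /not_implyP [m1 nLm]] := (existsNP _).2 nAx.
  exists (~` Lambda_n f Xs m, [set n | (m <= n)%N]) => /=.
    split; last exact: nbhs_infty_ge.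
    apply: open_nbhs_nbhs; split => //; apply: closed_openC; exact: Lambda_closed.
  case => x' n /= [nLx mn] Ln; exfalso; apply: nLx; exact: Lambda_mono Ln.
have [n1 _ Hn1] := nc nat \oo P _ H.
by exists n1 => n n1n x; apply: (Hn1 n n1n x).
Qed.

Lemma stepC r :
  compact [set: X] -> locally_connected_space (X := X) -> 0 < r ->
  exists m : nat, forall y : X, exists V c,
    [/\ connected V, V `<=` ball c r & ball y (m.+1%:R^-1) `<=` V].
Proof.
move=> cX lc r0.
have nc := (compact_near_coveringP _).1 cX.
pose P (n : nat) (y : X) := exists V c,
    [/\ connected V, V `<=` ball c r & ball y (n.+1%:R^-1) `<=` V].
have H : forall x, [set: X] x -> \forall x' \near x & i \near \oo, P i x'.
  move=> x _.
  have [V [oV Vx cV Vsub]] := lc x (ball x r) (nbhsx_ballx x r r0).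
  have : nbhs x V by apply: open_nbhs_nbhs; split.
  move=> /nbhs_ballP [e /= e0 be].
  have e20 : 0 < e / 2 by rewrite divr_gt0.
  have [m hm] := ltr_add_invr e20; rewrite add0r in hm.
  exists (ball x (m.+1%:R^-1), [set n | (m <= n)%N]) => /=.
    split; last exact: nbhs_infty_ge.
    by apply: nbhsx_ballx; rewrite invr_gt0 ltr0n.
  case => x' n /= [bx mn]; exists V, x; split => //.
  move=> z /inball bz; apply: be; apply/inball.
  have : n.+1%:R^-1 <= m.+1%:R^-1 :> R.
    by rewrite lef_pV2 ?posrE ?ltr0n // ler_nat.
  have := mtri x x' z; move/inball: bx.
  move=> h1 h2 h3; apply: le_lt_trans h2 _; rewrite [e]splitr; apply: ltrD.
    exact: lt_trans h1 hm.
  exact: lt_trans (lt_le_trans bz h3) hm.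
have [m _ Hm] := nc nat \oo P _ H.
by exists m => y; apply: (Hm m (leqnn m) y).
Qed.

Lemma boundedX (x0 : X) :
  compact [set: X] -> exists D, forall y z : X, mdist y z <= D.
Proof.
move=> cX.
have nc := (compact_near_coveringP _).1 cX.
pose P (n : nat) (y : X) := mdist x0 y <= n%:R.
have H : forall x, [set: X] x -> \forall x' \near x & i \near \oo, P i x'.
  move=> x _.
  have h0 : 0 <= mdist x0 x + 1 by rewrite addr_ge0 ?mdist_ge0.
  have hk := archi_boundP h0.
  exists (ball x 1, [set n | (Num.Def.archi_bound (mdist x0 x + 1) <= n)%N]) => /=.
    split; last exact: nbhs_infty_ge.
    exact: nbhsx_ballx.
  case => x' n /= [/inball bx kn]; rewrite /P.
  have := mtri x0 x x'.
  have : (Num.Def.archi_bound (mdist x0 x + 1))%:R <= n%:R :> R by rewrite ler_nat.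
  move: hk bx; set a := mdist x0 x; set b := mdist x x'; set c := mdist x0 x'.
  set K := (_ %:R); set M := (_ %:R).
  move=> *; lra.
have [n _ Hn] := nc nat \oo P _ H.
exists (n%:R + n%:R) => y z; apply: le_trans (mtri y x0 z) _.
rewrite (msym y x0); apply: lerD; exact: (Hn n (leqnn n)).
Qed.

Lemma small_pow (lam D d : R) :
  0 <= lam -> lam < 1 -> 0 <= D -> 0 < d ->
  exists k, forall n, (k <= n)%N -> lam ^+ n * D < d.
Proof.
move=> l0 l1 D0 d0.
have D1 : 0 < D + 1 by rewrite ltr_wpDl.
have dD : 0 < d / (D + 1) by rewrite divr_gt0.
have := @cvg_expr R lam _ (ball (0:R) (d / (D + 1))) (nbhsx_ballx _ _ dD).
move=> [|k _ Hk]; first by rewrite ger0_norm.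
exists k => n kn; have := Hk n kn; rewrite /= /ball /= sub0r normrN.
rewrite ger0_norm ?exprn_ge0 // ltr_pdivlMr // => h.
apply: le_lt_trans h; apply: ler_wpM2l; first exact: exprn_ge0.
by rewrite lerDl.
Qed.

End Helpers.

Lemma arith3 (R : realType) (e p q s u t : R) :
  0 < e -> p < e / 4 -> q < e / 4 -> s < e / 4 -> u <= s + q -> t <= p + u -> e <= t -> False.
Proof. move=> *; lra. Qed.

Lemma get_e (R : realType) (X : metricType R) (f : X -> X) (N : nat)
  (Xs : 'I_N -> set X) :
  (disc_set Xs = set0 \/ set_dist (attractor f Xs) (disc_set Xs) != 0%E) ->
  exists2 e : R, 0 < e & forall l z, attractor f Xs l -> disc_set Xs z ->
    e <= mdist l z.
Proof.
case=> [-> | hD]; first by exists 1 => // l z _.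
have S0 : (0 <= set_dist (attractor f Xs) (disc_set Xs))%E.
  apply/ereal_infP => _ [l _ [z _ <-]]; by rewrite lee_fin mdist_ge0.
have lb l z : attractor f Xs l -> disc_set Xs z ->
    (set_dist (attractor f Xs) (disc_set Xs) <= (mdist l z)%:E)%E.
  by move=> Al Dz; apply: ereal_inf_lbound; exists l => //; exists z.
move: hD S0 lb; case: (set_dist _ _) => [r| |] hD S0 lb.
- exists r; first by rewrite lt_neqAle eq_sym -lee_fin S0 andbT; exact: hD.
  by move=> l z Al Dz; rewrite -lee_fin; exact: lb.
- by exists 1 => // l z Al Dz; have := lb l z Al Dz.
- by [].
Qed.

Theorem lemma1 (R : realType) (X : metricType R)
  (f : X -> X) (N : nat) (Xs : 'I_N -> set X) :
  compact [set: X] ->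
  locally_connected_space (X := X) ->
  piecewise_contracting f Xs ->
  (disc_set Xs = set0 \/ set_dist (attractor f Xs) (disc_set Xs) != 0%E) ->
  exists n0 : nat, (1 <= n0)%N /\
    forall (n : nat) (A : set X), (n0 <= n)%N -> is_atom f Xs n A ->
      exists i : 'I_N, A `<=` Xs i.
Proof.
move=> cX lc [[N2 ne op disj cov] [[lam [/andP[l0 l1] Hf]] [x0 _]]] hD.
have {}l0 := ltW l0.
have [e e0 He] := @get_e _ _ f _ Xs hD.
pose r := e / 4.
have r0 : 0 < r by rewrite divr_gt0.
have [m Hm] := stepC r cX lc r0.
have [n1 Hn1] := @stepA _ _ f _ Xs r cX r0.
have [D HD] := boundedX x0 cX.
have D0 : 0 <= D by apply: le_trans (HD x0 x0); exact: mdist_ge0.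
have dpos : 0 < m.+1%:R^-1 :> R by rewrite invr_gt0 ltr0n.
have [k Hk] := small_pow lam D _ l0 l1 D0 dpos.
exists (maxn 1 (maxn n1 k)); split; first by rewrite leq_maxl.
move=> n A n0n [n1' [w [sw EA]]].
have i0 : 'I_N := Ordinal (leq_trans (isT : (0 < 2)%N) N2).
case: (pselect (A !=set0)) => [[a Aa]|nA]; last first.
  by exists i0 => y Ay; exfalso; apply: nA; exists y.
have n1n : (n1 <= n)%N.
  by apply: leq_trans n0n; rewrite leq_max leq_maxl orbT.
have kn : (k <= n)%N.
  by apply: leq_trans n0n; rewrite leq_max leq_maxr orbT.
have diam y : A y -> mdist a y < m.+1%:R^-1.
  move=> Ay; rewrite EA in Aa Ay.
  apply: le_lt_trans (@atom_diam _ _ f _ Xs lam D l0 Hf HD _ _ _ Aa Ay) _.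
  by rewrite sw; exact: Hk.
have La : Lambda_n f Xs n a by exists A; split => //; split => //; exists w.
have [l [Al la]] := Hn1 n n1n a La.
have [V [c [cV Vc aV]]] := Hm a.
have Va : V a by apply: aV; exact: ballxx.
have Vgood v : V v -> exists i, Xs i v.
  move=> Vv; case: (pselect (exists i, Xs i v)) => // nv; exfalso.
  have Dv : disc_set Xs v by move=> -[i _ Xi]; apply: nv; exists i.
  have := He l v Al Dv.
  have := mtri l a v; have := mtri a c v.
  move/inball: (Vc _ Vv) => cv; move/inball: (Vc _ Va) => ca.
  rewrite (msym a c).
  move: la cv ca; rewrite /r; exact: arith3 e0.
have [i Xia] := Vgood a Va.
have VX : V `&` Xs i = V.
  apply: cV; first by exists a.
    by exists (Xs i).
  exists (~` \bigcup_(j in [set j | j != i]) Xs j).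
    by apply: open_closedC; apply: bigcup_open => j _; exact: op.
  apply/seteqP; split => v [Vv Xv]; split => //.
    move=> [j /= ji Xj]; have : (Xs j `&` Xs i) v by [].
    by rewrite disj.
  have [j Xj] := Vgood v Vv.
  case: (eqVneq j i) => [<- //|ji]; exfalso; apply: Xv; by exists j.
exists i => y Ay; have : V y by apply: aV; apply/inball; exact: diam.
by rewrite -VX => -[].
Qed.
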